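(* Let $S$ be a numerical semigroup with minimal generating set $P$ and let $G=G(S)=(V,E)$. Then every vertex of $G$ of maximal degree belongs to $P$. Moreover, for every $r\ge1$, the set of vertices of $G$ of degree $r$ is an antichain under divisibility, i.e. there are no two distinct vertices $v_1,v_2$ of degree $r$ with $v_2-v_1\in S$.
   Context: A numerical semigroup is a subset $S\subseteq\mathbb N$ containing $0$, closed under addition, with finite complement; $S^*=S\setminus\{0\}$, $m=\min S^*$, $P=S^*\setminus(S^*+S^* )$. $X=\{s\in S^*: s-m\notin S\}$. The graph $G(S)$ has edge set all subsets $\{x,y\}\subseteq X$ ($x=y$ allowed) with $x+y\in X$, and vertex set $V$ the endvertices of these edges. $N_G(x)=\{y\in X: x+y\in X\}$ and $\deg(x)=|N_G(x)|$. *)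

(* Defs.v *)
From mathcomp Require Import all_boot.
Set Implicit Arguments. Unset Strict Implicit. Unset Printing Implicit Defensive.

Definition numerical_semigroup (S : pred nat) : Prop :=
  [/\ S 0, (forall a b, S a -> S b -> S (a + b)) & exists N, forall n, N <= n -> S n].

Definition Sstar (S : pred nat) (x : nat) : Prop := S x /\ 0 < x.

Definition multiplicity (S : pred nat) (m : nat) : Prop :=
  Sstar S m /\ forall s, Sstar S s -> m <= s.

Definition minimal_gen (S : pred nat) (x : nat) : Prop :=
  Sstar S x /\ ~ (exists a b, [/\ Sstar S a, Sstar S b & a + b = x]).

(* X = { s in Sstar : s - m notin S } (s >= m for s in Sstar, so nat subtraction is exact) *)
Definition Xset (S : pred nat) (m x : nat) : Prop :=
  Sstar S x /\ ~ S (x - m).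

Definition edge (S : pred nat) (m x y : nat) : Prop :=
  [/\ Xset S m x, Xset S m y & Xset S m (x + y)].

Definition vertex (S : pred nat) (m v : nat) : Prop := exists y, edge S m v y.

Definition nbr (S : pred nat) (m x y : nat) : Prop :=
  Xset S m y /\ Xset S m (x + y).

Definition has_degree (S : pred nat) (m x r : nat) : Prop :=
  exists s : seq nat, [/\ uniq s, (forall y, y \in s <-> nbr S m x y) & size s = r].

(* Main.v *)
Require Import Defs.
From mathcomp Require Import all_boot.
From mathcomp Require Import zify.
Set Implicit Arguments. Unset Strict Implicit.

Lemma notS_sub (S : pred nat) m x z :
  numerical_semigroup S -> S x -> m <= z -> ~ S (x + z - m) -> ~ S (z - m).
Proof.
move=> [_ Hadd _] Sx mz H Hz; apply: H.
have -> : x + z - m = x + (z - m) by lia.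
exact: Hadd.
Qed.

Lemma key (S : pred nat) m v1 b s1 s2 :
  numerical_semigroup S -> multiplicity S m -> Xset S m v1 -> S b -> 0 < b ->
  Xset S m (v1 + b) -> uniq s2 -> (forall y, y \in s2 -> nbr S m (v1 + b) y) ->
  (forall y, nbr S m v1 y -> y \in s1) -> size s2 < size s1.
Proof.
move=> HS [_ Hm] [[Sv1 v1p] nv1] Sb bp [[Sv2 v2p] nv2] u2 H2 H1.
have [_ Hadd _] := HS.
have mb : m <= b by apply: Hm.
have Hsub : {subset b :: map (addn^~ b) s2 <= s1}.
  move=> z; rewrite inE => /orP [/eqP -> | /mapP [y ys ->]].
    apply: H1; split; last by split.
    split; first by split.
    apply: (notS_sub HS Sv1 mb); exact: nv2.
  have [[[Sy yp] ny] [[Sv2y v2yp] nv2y]] := H2 y ys.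
  have my : m <= y by apply: Hm.
  apply: H1.
  split.
    split; first by split; [exact: Hadd | lia].
    apply: (notS_sub HS Sv1); first lia.
    by have -> : v1 + (y + b) = v1 + b + y by lia.
  by have -> : v1 + (y + b) = v1 + b + y by lia.
have Hu : uniq (b :: map (addn^~ b) s2).
  rewrite /= map_inj_uniq ?u2 ?andbT; last by move=> x y; apply: addIn.
  apply/mapP => -[y ys E].
  have [[[_ yp] _] _] := H2 y ys; lia.
have := uniq_leq_size Hu Hsub.
by rewrite /= size_map.
Qed.

Theorem corollary4p8 (S : pred nat) (m : nat) :
  numerical_semigroup S -> multiplicity S m ->
  (forall v r, vertex S m v -> has_degree S m v r ->
     (forall w r', vertex S m w -> has_degree S m w r' -> r' <= r) ->
     minimal_gen S v)
  /\
  (forall r, 1 <= r -> forall v1 v2,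
     vertex S m v1 -> vertex S m v2 ->
     has_degree S m v1 r -> has_degree S m v2 r ->
     v1 < v2 -> ~ S (v2 - v1)).
Proof.
move=> HS Hmul; have [S0 Hadd [N HN]] := HS; have [_ Hm] := Hmul.
split.
  move=> v r [y [Xv _ _]] [s [us Hs sz]] Hmax.
  split; first by case: Xv.
  move=> [a [b [Sa Sb ab]]].
  have ma : m <= a by apply: Hm.
  have mb : m <= b by apply: Hm.
  have [[Sv vp] nv] := Xv.
  have Xa : Xset S m a.
    split=> //; apply: (notS_sub HS (x:=b)); [by case: Sb | done |].
    by rewrite addnC ab.
  have Xb : Xset S m b.
    split=> //; apply: (notS_sub HS (x:=a)); [by case: Sa | done |].
    by rewrite ab.
  pose nb y := [&& S y, 0 < y, ~~ S (y - m), S (a + y), 0 < a + y & ~~ S (a + y - m)].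
  pose s1 := filter nb (iota 0 (N + m)).
  have Hs1 : forall y, nbr S m a y <-> y \in s1.
    move=> z; rewrite mem_filter mem_iota /nb; split.
      move=> [[[Sz zp] nz] [[Saz azp] naz]].
      rewrite Sz zp Saz azp /=.
      have -> : S (z - m) = false by apply/negP.
      have -> : S (a + z - m) = false by apply/negP.
      rewrite /=; case: (leqP (N + m) z) => // hz.
      exfalso; apply: nz; apply: HN; lia.
    by move=> /andP [/andP [Sz /and5P [zp /negP nz Saz azp /negP naz]] _].
  have Hva : vertex S m a by exists b; split=> //; rewrite ab.
  have := Hmax a (size s1) Hva.
  have Hd : has_degree S m a (size s1).
    exists s1; split=> //; first by rewrite filter_uniq // iota_uniq.
    by move=> z; rewrite Hs1.
  move=> /(_ Hd); rewrite leqNgt => /negP; apply.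
  rewrite -sz; apply: (key (b:=b) HS Hmul Xa).
  - by case: Sb.
  - by case: Sb.
  - by rewrite ab.
  - done.
  - by move=> z; rewrite ab => /Hs.
  - by move=> z /Hs1.
move=> r _ v1 v2 [y1 [X1 _ _]] [y2 [X2 _ _]] [s1 [u1 H1 sz1]] [s2 [u2 H2 sz2]] lt12 Sd.
have E : v2 = v1 + (v2 - v1) by lia.
have : size s2 < size s1.
  apply: (key HS Hmul X1 Sd); first lia.
  - by rewrite -E.
  - done.
  - by move=> z; rewrite -E => /H2.
  - by move=> z /H1.
by rewrite sz1 sz2 ltnn.
Qed.
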